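(* Let $n\ge 2$ and let $p,q$ be positive integers with $\gcd(p,q)=1$. Let $A$ be the $n\times n$ integer matrix with columns $a_k=q e_k-p e_{k+1}$ ($1\le k\le n-1$) and $a_n=q e_n+p e_1$. Then for every $i\in\{1,\dots,n\}$, $$\min\{l\in\mathbb{Z}_{\ge1} : l e_i\in A\mathbb{Z}^n\}=p^n+q^n.$$ In particular, if moreover $p\neq q$, there exists a unilateral tiling of $(\mathbb{Z}/(p^n+q^n)\mathbb{Z})^n$ by discrete hypercubes of side lengths $p$ and $q$.
   Context: $e_i$ denotes the $i$-th standard unit vector. Let $N=p^n+q^n$. A discrete hypercube of side length $s$ in $(\mathbb{Z}/N\mathbb{Z})^n$ is the image of a set $x+\{0,1,\dots,s-1\}^n$, $x\in\mathbb{Z}^n$, under reduction modulo $N$. A tiling of $(\mathbb{Z}/N\mathbb{Z})^n$ by such hypercubes is a family of them that partitions $(\mathbb{Z}/N\mathbb{Z})^n$; it is unilateral if no two distinct tiles of the same side length $s$ share a full facet, i.e. there are no two tiles of side $s$ with corners $x,x'$ such that $x'-x\equiv \pm s e_i \pmod N$ for some $i$. *)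

(* Defs.v *)
From HB Require Import structures.
From mathcomp Require Import all_boot all_order all_algebra.
Set Implicit Arguments. Unset Strict Implicit. Unset Printing Implicit Defensive.
Import Order.TTheory GRing.Theory Num.Theory.
Local Open Scope ring_scope.

(* The n x n integer matrix A (0-based indices): for j < n-1, column j is
   q e_j - p e_(j+1); column n-1 is q e_(n-1) + p e_0. *)
Definition matA (n p q : nat) : 'M[int]_n :=
  \matrix_(i < n, j < n)
    if (j < n.-1)%N then
      (if i == j :> nat then q%:Z else 0) - (if i == j.+1 :> nat then p%:Z else 0)
    else
      (if i == j :> nat then q%:Z else 0) + (if i == 0%N :> nat then p%:Z else 0).

Definition in_lattice (n : nat) (A : 'M[int]_n) (v : 'cV[int]_n) : Prop :=
  exists x : 'cV[int]_n, v = A *m x.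

Definition unitv (n : nat) (i : 'I_n) : 'cV[int]_n := delta_mx i 0.

(* Points of (Z/NZ)^n are represented by integer vectors x : 'I_n -> int,
   compared componentwise modulo N. *)
Definition cong_vec (n N : nat) (x y : 'I_n -> int) : Prop :=
  forall i, (x i == y i %[mod N%:Z])%Z.

Definition cube_mem (n N s : nat) (x y : 'I_n -> int) : Prop :=
  exists t : 'I_n -> nat, (forall i, (t i < s)%N) /\
    cong_vec N y (fun i => x i + (t i)%:Z).

Definition is_tiling (n N : nat) (I : finType) (side : I -> nat)
    (corner : I -> 'I_n -> int) : Prop :=
  forall y : 'I_n -> int, exists! k : I, cube_mem N (side k) (corner k) y.

Definition unilateral (n N : nat) (I : finType) (side : I -> nat)
    (corner : I -> 'I_n -> int) : Prop :=
  forall k k' : I, k != k' -> side k = side k' ->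
    forall i : 'I_n,
      ~ cong_vec N (fun j => corner k' j - corner k j)
                   (fun j => if j == i then (side k)%:Z else 0) /\
      ~ cong_vec N (fun j => corner k' j - corner k j)
                   (fun j => if j == i then - (side k)%:Z else 0).

(* Main.v *)
Require Import Defs.
From HB Require Import structures.
From mathcomp Require Import all_boot all_order all_algebra.
From mathcomp Require Import algC cyclotomic ring zify.
Import Order.TTheory GRing.Theory Num.Theory.
Local Open Scope ring_scope.

Lemma root1_coprime (z : algC) a b : coprime a b -> z ^+ a = 1 -> z ^+ b = 1 -> z = 1.
Proof.
move=> co za zb.
case: (posnP a) => [a0|a_gt0].
  by move: co; rewrite a0 /coprime gcd0n => /eqP b1; rewrite b1 expr1 in zb.
case: (egcdnP b a_gt0) => km kn E _.
move/eqP: co => co; rewrite co in E.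
have : z ^+ (km * a) = z ^+ (kn * b + 1) by rewrite E.
by rewrite exprD expr1 (mulnC _ a) (mulnC _ b) !exprM za zb !expr1n mul1r.
Qed.

Definition wt (n p q j : nat) : nat := (q ^ j * p ^ (n.-1 - j))%N.
Definition phin (n p q : nat) (t : 'I_n -> nat) : nat := (\sum_(j < n) t j * wt n p q j)%N.
Definition Rep (n p q : nat) := ({ffun 'I_n -> 'I_q} + {ffun 'I_n -> 'I_p})%type.
Definition raw (n p q : nat) (r : Rep n p q) : nat :=
  match r with
  | inl t => phin n p q (fun j => t j)
  | inr s => (q ^ n + phin n p q (fun j => s j))%N
  end.
Arguments raw {n p q}.


Lemma box_sum (z : algC) n p q a :
  \sum_(t : {ffun 'I_n -> 'I_a}) z ^+ phin n p q (fun j => t j) =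
  \prod_(j < n) \sum_(b < a) (z ^+ wt n p q j) ^+ b.
Proof.
rewrite bigA_distr_bigA; apply: eq_bigr => t _.
rewrite /phin -prodrXr; apply: eq_bigr => j _.
by rewrite -exprM mulnC.
Qed.

Lemma coprime_qN n p q : (0 < n)%N -> coprime p q -> coprime q (p ^ n + q ^ n).
Proof.
case: n => // n _ co.
rewrite /coprime addnC (expnSr q n) gcdnMDl -/(coprime q (p ^ n.+1)).
by apply: coprimeXr; rewrite coprime_sym.
Qed.

Lemma coprime_pN n p q : (0 < n)%N -> coprime p q -> coprime p (p ^ n + q ^ n).
Proof.
move=> n0 co; rewrite addnC; apply: coprime_qN => //; by rewrite coprime_sym.
Qed.

Lemma coprime_wN n p q j : (0 < n)%N -> coprime p q -> coprime (wt n p q j) (p ^ n + q ^ n).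
Proof.
move=> n0 co; rewrite /wt coprimeMl; apply/andP; split; apply: coprimeXl.
  exact: coprime_qN.
exact: coprime_pN.
Qed.

Lemma geom_mul (u : algC) a : (1 - u) * \sum_(b < a) u ^+ b = 1 - u ^+ a.
Proof. by rewrite -opprB mulNr -subrX1 opprB. Qed.

Lemma F_zero (z : algC) n p q : (0 < n)%N -> coprime p q ->
  z ^+ (p ^ n + q ^ n) = 1 -> z != 1 -> \sum_(r : Rep n p q) z ^+ raw r = 0.
Proof.
move=> n0 co zN z1.
rewrite big_sumType /=.
under [X in _ + X]eq_bigr do rewrite exprD.
rewrite -mulr_sumr !box_sum.
set D := \prod_(j < n) (1 - z ^+ wt n p q j).
have D0 : D != 0.
  apply/prodf_neq0 => j _; rewrite subr_eq0 eq_sym; apply/negP => /eqP zw.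
  by move/negP: z1; apply; apply/eqP; apply: (@root1_coprime z _ _ (coprime_wN _ _ _ j n0 co) zw zN).
apply/eqP; rewrite -(mulrI_eq0 _ (mulfI D0)) mulrDr mulrCA -!big_split /=.
under eq_bigr do rewrite geom_mul -exprM.
under [X in _ + _ * X]eq_bigr do rewrite geom_mul -exprM.
case: n n0 zN {D D0} => // m _ zN.
rewrite big_ord_recr big_ord_recl /=.
have -> : \prod_(i < m) (1 - z ^+ (wt m.+1 p q i * q)) =
          \prod_(i < m) (1 - z ^+ (wt m.+1 p q (bump 0 i) * p)).
  apply: eq_bigr => i _; congr (1 - z ^+ _); rewrite /wt /= /bump /= add1n.
  have lti := ltn_ord i.
  have -> : (m - i = (m - i.+1).+1)%N by rewrite subnSK.
  rewrite !expnS; ring.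
have -> : (wt m.+1 p q m * q = q ^ m.+1)%N by rewrite /wt /= subnn expn0 muln1 expnSr.
have -> : (wt m.+1 p q 0 * p = p ^ m.+1)%N by rewrite /wt /= subn0 expn0 mul1n expnSr.
set Q := \prod_(i < m) _.
have ab : z ^+ (p ^ m.+1) * z ^+ (q ^ m.+1) = 1 by rewrite -exprD.
apply/eqP; transitivity (Q * (1 - z ^+ (p ^ m.+1) * z ^+ (q ^ m.+1))); first by ring.
by rewrite ab subrr mulr0.
Qed.

Lemma count_sum (z : algC) n p q N (N0 : (0 < N)%N) : z ^+ N = 1 ->
  \sum_(i < N) (#|[pred r : Rep n p q | (raw r %% N)%N == i]|)%:R * z ^+ i =
  \sum_(r : Rep n p q) z ^+ raw r.
Proof.
move=> zN.
pose h (r : Rep n p q) : 'I_N := Ordinal (ltn_pmod (raw r) N0).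
rewrite (partition_big h predT) //=.
apply: eq_bigr => i _.
rewrite (eq_bigr (fun _ => z ^+ i)); last first.
  by move=> r /eqP <-; rewrite /= expr_mod.
by rewrite sumr_const mulr_natl.
Qed.

Lemma geom_zero (z : algC) N : z ^+ N = 1 -> z != 1 -> \sum_(i < N) z ^+ i = 0.
Proof.
move=> zN z1; apply/eqP.
have : (z - 1) * \sum_(i < N) z ^+ i == 0 by rewrite -subrX1 zN subrr.
by rewrite mulf_eq0 subr_eq0 (negbTE z1).
Qed.

Lemma partition n p q : (0 < n)%N -> coprime p q ->
  forall m, (m < p ^ n + q ^ n)%N ->
  #|[pred r : Rep n p q | (raw r %% (p ^ n + q ^ n))%N == m]| = 1%N.
Proof.
move=> n0 co m mN.
set N := (p ^ n + q ^ n)%N.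
have N0 : (0 < N)%N by apply: leq_ltn_trans mN.
have [zeta prim] := C_prim_root_exists N0.
pose E (m : nat) : algC := (#|[pred r : Rep n p q | (raw r %% N)%N == m]|)%:R - 1.
pose g := \poly_(m < N) E m.
have key : forall z : algC, z ^+ N = 1 ->
    g.[z] = \sum_(r : Rep n p q) z ^+ raw r - \sum_(i < N) z ^+ i.
  move=> z zN; rewrite horner_poly /E.
  under eq_bigr do rewrite mulrBl mul1r.
  by rewrite sumrB count_sum.
have g0 : g = 0.
  apply: (@roots_geq_poly_eq0 _ g [seq zeta ^+ k | k <- iota 0 N]).
  - apply/allP => x /mapP [k kin ->].
    have zN : (zeta ^+ k) ^+ N = 1 by rewrite exprAC (prim_expr_order prim) expr1n.
    rewrite /root key //.
    case: (posnP k) => [->|k0].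
      rewrite expr0.
      under eq_bigr do rewrite expr1n.
      under [X in _ - X]eq_bigr do rewrite expr1n.
      rewrite !sumr_const card_sum !card_ffun !card_ord.
      by rewrite addnC subrr.
    have z1 : zeta ^+ k != 1.
      rewrite -(expr0 zeta) (eq_prim_root_expr prim) mod0n modn_small //.
        by rewrite -lt0n.
      by move: kin; rewrite mem_iota.
    by rewrite (F_zero _ _ _ _ n0 co) // geom_zero // subrr.
  - rewrite map_inj_in_uniq ?iota_uniq // => a b.
    rewrite !mem_iota /= !add0n => aN bN /eqP.
    by rewrite (eq_prim_root_expr prim) !modn_small // => /eqP.
  - by rewrite size_map size_iota size_poly.
move: (congr1 (fun P : {poly algC} => P`_m) g0).
rewrite coef_poly mN coef0 /E => /eqP.
by rewrite subr_eq0 pnatr_eq1 => /eqP.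
Qed.

Definition PhiZ (n p q : nat) (v : 'I_n -> int) : int :=
  \sum_(j < n) v j * (wt n p q j)%:Z.

Lemma sum_ind n (F : nat -> int) i :
  \sum_(j < n) (if (j : nat) == i then F j else 0) = if (i < n)%N then F i else 0.
Proof. by rewrite -big_mkcond big_ord1_eq. Qed.

Lemma wt_step n p q k : (k.+1 < n)%N -> (q * wt n p q k = p * wt n p q k.+1)%N.
Proof.
move=> kn; rewrite /wt.
have -> : (n.-1 - k = (n.-1 - k.+1).+1)%N by lia.
rewrite !expnS; ring.
Qed.

Lemma colsum n p q (k : 'I_n) : (0 < n)%N ->
  \sum_(j < n) matA n p q j k * (wt n p q j)%:Z =
  if (k < n.-1)%N then 0 else (p ^ n + q ^ n)%N%:Z.
Proof.
move=> n0; rewrite /matA.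
under eq_bigr do rewrite mxE.
case: ifP => kn.
  under eq_bigr do rewrite mulrBl !(fun_if (fun x => x * _)) !mul0r.
  rewrite sumrB (sum_ind n (fun j => q%:Z * (wt n p q j)%:Z)) (sum_ind n (fun j => p%:Z * (wt n p q j)%:Z)) ltn_ord.
  have -> : (k.+1 < n)%N by move: kn; lia.
  apply/eqP; rewrite subr_eq0; apply/eqP.
  by rewrite -!PoszM wt_step //; move: kn; lia.
under eq_bigr do rewrite mulrDl !(fun_if (fun x => x * _)) !mul0r.
rewrite big_split /= (sum_ind n (fun j => q%:Z * (wt n p q j)%:Z)) (sum_ind n (fun j => p%:Z * (wt n p q j)%:Z)) ltn_ord n0.
have kn1 : (k : nat) = n.-1 by move: kn (ltn_ord k); lia.
rewrite -!PoszM -PoszD kn1 /wt subnn subn0 expn0 muln1 mul1n.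
by congr Posz; rewrite -!expnS prednK // addnC.
Qed.

Lemma PhiZ_lattice n p q (x : 'cV[int]_n) : (0 < n)%N ->
  ((p ^ n + q ^ n)%N%:Z %| PhiZ n p q (fun j => (matA n p q *m x) j ord0))%Z.
Proof.
move=> n0; rewrite /PhiZ.
under eq_bigr do rewrite mxE mulr_suml.
rewrite exchange_big /=; apply: rpred_sum => k _.
under eq_bigr do rewrite mulrAC.
rewrite -mulr_suml colsum //; case: ifP => _; first by rewrite mul0r rpred0.
by apply: dvdz_mulr; apply: dvdzz.
Qed.

Lemma PhiZ_unit n p q (i : 'I_n) (l : int) :
  PhiZ n p q (fun j => (l *: unitv i) j ord0) = l * (wt n p q i)%:Z.
Proof.
rewrite /PhiZ (bigD1 i) //= big1 ?addr0.
  by rewrite !mxE !eqxx mulr1.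
move=> j ji; rewrite !mxE (negbTE ji) /= mulr0 mul0r //.
Qed.

Lemma lattice_lower n p q (i : 'I_n) (l : nat) : (0 < n)%N -> coprime p q -> (0 < l)%N ->
  in_lattice (matA n p q) (l%:Z *: unitv i) -> (p ^ n + q ^ n <= l)%N.
Proof.
move=> n0 co l0 [x hx].
have := PhiZ_lattice n p q x n0; rewrite -hx PhiZ_unit -PoszM dvdzE !absz_nat.
rewrite Gauss_dvdl; first by move/dvdn_leq; apply.
by rewrite coprime_sym coprime_wN.
Qed.

Lemma row_formula n p q (x : 'cV[int]_n) (X : nat -> int) (j : 'I_n) :
  (0 < n)%N -> (forall k : 'I_n, x k ord0 = X k) ->
  (matA n p q *m x) j ord0 =
  q%:Z * X j - (if (0 < j)%N then p%:Z * X j.-1 else 0)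
  + (if (j : nat) == 0%N then p%:Z * X n.-1 else 0).
Proof.
move=> n0 hX; rewrite mxE.
have E : forall k : 'I_n, matA n p q j k * x k ord0 =
   (if (j : nat) == k then q%:Z * X k else 0)
   - (if (j : nat) == k.+1 then p%:Z * X k else 0)
   + (if (k : nat) == n.-1 then (if (j : nat) == 0%N then p%:Z * X k else 0) else 0).
  move=> k; rewrite mxE hX; have := ltn_ord k; have := ltn_ord j.
  case: ifP => hk; case E1: ((j : nat) == k); case E2: ((j : nat) == k.+1);
    case E3: ((k : nat) == n.-1); case E4: ((j : nat) == 0%N);
    move=> hj hk'; rewrite ?mul0r ?mulr0 ?subr0 ?add0r ?addr0 ?sub0r; try (exfalso; lia); try ring.
under eq_bigr do rewrite E.
rewrite big_split /= sumrB.
have -> : \sum_(i < n) (if (j : nat) == i then q%:Z * X i else 0) = q%:Z * X j.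
  rewrite (eq_bigr (fun i : 'I_n => if (i : nat) == j then q%:Z * X i else 0)).
    by rewrite (sum_ind n (fun k => q%:Z * X k)) ltn_ord.
  by move=> i _; rewrite eq_sym.
rewrite (sum_ind n (fun k => if (j : nat) == 0%N then p%:Z * X k else 0)).
have -> : (n.-1 < n)%N by lia.
congr (_ - _ + _).
case: (posnP j) => [j0|j0].
  rewrite j0 /= big1 // => k _; by [].
have -> : \sum_(i < n) (if (j : nat) == i.+1 then p%:Z * X i else 0) =
          \sum_(i < n) (if (i : nat) == j.-1 then p%:Z * X i else 0).
  apply: eq_bigr => k _; congr (if _ then _ else _).
  by apply/eqP/eqP; lia.
rewrite (sum_ind n (fun k => p%:Z * X k)).
have hj : (j.-1 < n)%N by move: (ltn_ord j); lia.
by rewrite hj.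
Qed.

Definition Xsol (n p q i : nat) (j : nat) : int :=
  if (i <= j)%N then (q%:Z) ^+ (n.-1 + i - j) * (p%:Z) ^+ (j - i)
  else - ((q%:Z) ^+ (i.-1 - j) * (p%:Z) ^+ (n + j - i)).

Lemma PoszX (a k : nat) : Posz (a ^ k)%N = (Posz a) ^+ k.
Proof. by rewrite -!natz natrX. Qed.

Lemma lattice_exists n p q (i : 'I_n) : (0 < n)%N ->
  in_lattice (matA n p q) ((p ^ n + q ^ n)%N%:Z *: unitv i).
Proof.
move=> n0; exists (\col_j Xsol n p q i j).
apply/matrixP => j k; rewrite ord1.
rewrite (row_formula n p q _ (Xsol n p q i)) //; last by move=> k'; rewrite mxE.
rewrite !mxE /Xsol.
have ji : (j == i) = ((j : nat) == i) by [].
rewrite ji eqxx andbT PoszD !PoszX.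
have hi := ltn_ord i; have hj := ltn_ord j.
move: (i : nat) (j : nat) hi hj; clear ji k; clear i j => i' j' hi hj.
case: n n0 hi hj => [//|m] _ hi hj /=.
case: (posnP j') => [j0|j0].
  rewrite j0 /= subr0.
  case: (posnP i') => [i0|i0].
    rewrite i0 /= addn0 !subn0 subnn !expr0 mulr1 mul1r mulr1.
    by rewrite !exprS; ring.
  have -> : (i' <= 0)%N = false by lia.
  have -> : (i' <= m)%N by lia.
  have -> : (0%N == i') = false by lia.
  rewrite mulr0 subn0 addn0.
  have -> : (m + i' - m = (i'.-1).+1)%N by lia.
  have -> : (m.+1 - i' = (m - i').+1)%N by lia.
  by rewrite !exprS; ring.
rewrite addr0.
case: (ltngtP i' j') => hij.
- have c1 : (i' <= j')%N by lia.
  have c2 : (i' <= j'.-1)%N by lia.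
  have c3 : (j' == i') = false by lia.
  rewrite ?c1 ?c2 ?c3.
  have -> : (m + i' - j'.-1 = (m + i' - j').+1)%N by lia.
  have -> : (j' - i' = (j'.-1 - i').+1)%N by lia.
  by rewrite mulr0 !exprS; ring.
- have c1 : (i' <= j')%N = false by lia.
  have c2 : (i' <= j'.-1)%N = false by lia.
  have c3 : (j' == i') = false by lia.
  rewrite ?c1 ?c2 ?c3.
  have -> : (i'.-1 - j'.-1 = (i'.-1 - j').+1)%N by lia.
  have -> : (m.+1 + j' - i' = (m.+1 + j'.-1 - i').+1)%N by lia.
  by rewrite mulr0 !exprS; ring.
- rewrite hij ?eqxx ?leqnn.
  have c2 : (j' <= j'.-1)%N = false by lia.
  rewrite ?c2 subnn addnK expr0 mulr1 mulr1.
  have -> : (j'.-1 - j'.-1 = 0)%N by lia.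
  have -> : (m.+1 + j'.-1 - j' = m)%N by lia.
  by rewrite expr0 mul1r !exprS; ring.
Qed.

Lemma mod_nat_eq (a : nat) (M : int) N : (0 < N)%N ->
  ((a%:Z == M %[mod N%:Z])%Z) = ((a %% N)%N == absz (M %% N%:Z)%Z).
Proof.
move=> N0.
have E : Posz (absz (M %% N%:Z)%Z) = (M %% N%:Z)%Z.
  by apply: gez0_abs; apply: modz_ge0; rewrite eqz_nat; lia.
by rewrite -E modz_nat eqz_nat.
Qed.

Lemma partitionZ n p q : (0 < n)%N -> (0 < p)%N -> coprime p q -> forall M : int,
  exists r : Rep n p q, ((raw r)%:Z == M %[mod (p ^ n + q ^ n)%N%:Z])%Z /\
    forall r', ((raw r')%:Z == M %[mod (p ^ n + q ^ n)%N%:Z])%Z -> r' = r.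
Proof.
move=> n0 p0 co M.
set N := (p ^ n + q ^ n)%N.
have N0 : (0 < N)%N by rewrite addn_gt0 expn_gt0 p0.
have mN : (absz (M %% N%:Z)%Z < N)%N.
  rewrite -ltz_nat gez0_abs ?modz_ge0 ?ltz_pmod //; rewrite ?ltz_nat ?eqz_nat; lia.
have := partition n p q n0 co _ mN; rewrite -/N => /eqP /card1P [r hr].
exists r; split.
  by rewrite mod_nat_eq //; move: (hr r); rewrite !inE eqxx => ->.
move=> r'; rewrite mod_nat_eq // => h.
by move: (hr r'); rewrite !inE h => /esym/eqP.
Qed.

Definition rb n p q (r : Rep n p q) : bool := if r is inl _ then true else false.
Definition rt n p q (r : Rep n p q) : 'I_n -> nat :=
  match r with inl t => fun j => t j | inr s => fun j => s j end.
Arguments rb {n p q}. Arguments rt {n p q}.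

Lemma rt_lt n p q (r : Rep n p q) j : (rt r j < if rb r then q else p)%N.
Proof. by case: r => t /=. Qed.

Lemma phin_Z n p q (t : 'I_n -> nat) :
  (phin n p q t)%:Z = PhiZ n p q (fun j => (t j)%:Z).
Proof.
rewrite /phin /PhiZ (big_morph Posz PoszD (erefl 0%:Z)).
by apply: eq_bigr => j _; rewrite PoszM.
Qed.

Lemma raw_Z n p q (r : Rep n p q) :
  (raw r)%:Z = (if rb r then 0 else (q ^ n)%N%:Z) + PhiZ n p q (fun j => (rt r j)%:Z).
Proof. by case: r => t /=; rewrite ?add0r ?PoszD phin_Z. Qed.

Definition mkRep n p q (p0 : (0 < p)%N) (q0 : (0 < q)%N) (b : bool) (t : 'I_n -> nat) :
  Rep n p q :=
  if b then inl [ffun j => Ordinal (ltn_pmod (t j) q0)]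
  else inr [ffun j => Ordinal (ltn_pmod (t j) p0)].

Lemma mkRep_b n p q p0 q0 b t : rb (@mkRep n p q p0 q0 b t) = b.
Proof. by case: b. Qed.

Lemma mkRep_t n p q p0 q0 b t : (forall j, t j < if b then q else p)%N ->
  rt (@mkRep n p q p0 q0 b t) =1 t.
Proof. by case: b => h j /=; rewrite ffunE /= modn_small. Qed.

Lemma PhiZ_add n p q (u v : 'I_n -> int) :
  PhiZ n p q (fun j => u j + v j) = PhiZ n p q u + PhiZ n p q v.
Proof. by rewrite /PhiZ -big_split; apply: eq_bigr => j _; rewrite mulrDl. Qed.

Lemma PhiZ_sub n p q (u v : 'I_n -> int) :
  PhiZ n p q (fun j => u j - v j) = PhiZ n p q u - PhiZ n p q v.
Proof. by rewrite /PhiZ -sumrB; apply: eq_bigr => j _; rewrite mulrBl. Qed.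

Lemma PhiZ_cong n p q (N : int) (u v : 'I_n -> int) :
  (forall j, (u j == v j %[mod N])%Z) -> (PhiZ n p q u == PhiZ n p q v %[mod N])%Z.
Proof.
move=> h; rewrite eqz_mod_dvd -PhiZ_sub /PhiZ; apply: rpred_sum => j _.
by apply: dvdz_mulr; rewrite -eqz_mod_dvd.
Qed.

Lemma PhiZ_delta n p q (i : 'I_n) (s : int) :
  PhiZ n p q (fun j => if j == i then s else 0) = s * (wt n p q i)%:Z.
Proof.
rewrite /PhiZ (bigD1 i) //= big1 ?addr0 ?eqxx // => j ji.
by rewrite (negbTE ji) mul0r.
Qed.

Definition goodk n p q (k : bool * {ffun 'I_n -> 'I_(p ^ n + q ^ n)}) : bool :=
  (PhiZ n p q (fun i => (k.2 i : nat)%:Z) ==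
     (if k.1 then 0 else (q ^ n)%N%:Z) %[mod (p ^ n + q ^ n)%N%:Z])%Z.

Definition Tile n p q : finType := {k : bool * {ffun 'I_n -> 'I_(p ^ n + q ^ n)} | goodk n p q k}.

Definition tside n p q (k : Tile n p q) : nat := if (val k).1 then q else p.
Definition tcorner n p q (k : Tile n p q) : 'I_n -> int := fun i => ((val k).2 i : nat)%:Z.

Lemma absmod_lt (a : int) N : (0 < N)%N -> (absz (a %% N%:Z)%Z < N)%N.
Proof.
move=> N0; rewrite -ltz_nat gez0_abs ?modz_ge0 ?ltz_pmod //; rewrite ?ltz_nat ?eqz_nat; lia.
Qed.

Lemma absmodE (a : int) N : (0 < N)%N -> Posz (absz (a %% N%:Z)%Z) = (a %% N%:Z)%Z.
Proof. by move=> N0; apply: gez0_abs; apply: modz_ge0; rewrite eqz_nat; lia. Qed.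

Lemma eq_PhiZ n p q (u v : 'I_n -> int) : u =1 v -> PhiZ n p q u = PhiZ n p q v.
Proof. by move=> h; apply: eq_bigr => j _; rewrite h. Qed.

Lemma tiling n p q : (0 < n)%N -> (0 < p)%N -> (0 < q)%N -> coprime p q ->
  is_tiling (p ^ n + q ^ n) (@tside n p q) (@tcorner n p q).
Proof.
move=> n0 p0 q0 co y.
have N0 : (0 < p ^ n + q ^ n)%N by rewrite addn_gt0 expn_gt0 p0.
have [r [hr hu]] := partitionZ n p q n0 p0 co (PhiZ n p q y).
pose b := rb r; pose t := rt r.
pose x : {ffun 'I_n -> 'I_(p ^ n + q ^ n)} :=
  [ffun i => Ordinal (@absmod_lt (y i - (t i)%:Z) _ N0)].
have xE : forall i, ((x i : nat)%:Z) = ((y i - (t i)%:Z) %% (p ^ n + q ^ n)%N%:Z)%Z.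
  by move=> i; rewrite ffunE /= absmodE.
have gx : goodk n p q (b, x).
  rewrite /goodk /= eqz_mod_dvd.
  have h1 : ((p ^ n + q ^ n)%N%:Z %| PhiZ n p q (fun i => (x i : nat)%:Z)
             - PhiZ n p q (fun i => y i - (t i)%:Z))%Z.
    by rewrite -eqz_mod_dvd; apply: PhiZ_cong => i; rewrite xE; apply/eqP; apply: modz_mod.
  have h2 : ((p ^ n + q ^ n)%N%:Z %| (raw r)%:Z - PhiZ n p q y)%Z by rewrite -eqz_mod_dvd.
  have -> : PhiZ n p q (fun i => (x i : nat)%:Z) - (if b then 0 else (q ^ n)%N%:Z) =
     (PhiZ n p q (fun i => (x i : nat)%:Z) - PhiZ n p q (fun i => y i - (t i)%:Z))
     - ((raw r)%:Z - PhiZ n p q y).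
    rewrite raw_Z PhiZ_sub -/b -/t; ring.
  exact: rpredB.
exists (exist _ (b, x) gx); split.
  exists t; split; first by move=> i; rewrite /tside /=; apply: rt_lt.
  move=> i; rewrite /tcorner /= xE; apply/eqP.
  by rewrite modzDml subrK.
move=> [[b' x'] gk'] [t' [ht' hc']].
rewrite /tside /= in ht'.
pose r' := mkRep n p q p0 q0 b' t'.
have rt' : rt r' =1 t' by apply: mkRep_t.
have hr' : ((raw r')%:Z == PhiZ n p q y %[mod (p ^ n + q ^ n)%N%:Z])%Z.
  rewrite raw_Z mkRep_b (eq_PhiZ n p q (fun j => (rt r' j)%:Z) (fun j => (t' j)%:Z)); last first.
    by move=> j; rewrite rt'.
  rewrite eqz_mod_dvd.
  have g1 := gk'; move: g1; rewrite /goodk /= eqz_mod_dvd => g1.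
  have g2 : ((p ^ n + q ^ n)%N%:Z %| PhiZ n p q y
       - PhiZ n p q (fun i => (x' i : nat)%:Z + (t' i)%:Z))%Z.
    by rewrite -eqz_mod_dvd; apply: PhiZ_cong => i; apply: hc'.
  rewrite PhiZ_add in g2.
  have -> : (if b' then 0 else (q ^ n)%N%:Z) + PhiZ n p q (fun j => (t' j)%:Z) - PhiZ n p q y =
    - (PhiZ n p q (fun i => (x' i : nat)%:Z) - (if b' then 0 else (q ^ n)%N%:Z))
    - (PhiZ n p q y - (PhiZ n p q (fun i => (x' i : nat)%:Z) + PhiZ n p q (fun j => (t' j)%:Z))).
    by ring.
  by rewrite rpredB ?rpredN.
have rr := hu r' hr'.
have bb : b' = b by rewrite -(mkRep_b n p q p0 q0 b' t') -/r' rr.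
have tt : forall j, t' j = t j by move=> j; rewrite -rt' rr.
apply: val_inj => /=; rewrite bb; congr pair.
apply/ffunP => i; apply: val_inj => /=.
apply/eqP; rewrite -eqz_nat; apply/eqP.
rewrite xE -(tt i).
have hx' : (0 <= Posz (x' i) < (p ^ n + q ^ n)%N%:Z) by rewrite ltz_nat ltn_ord.
rewrite -[RHS](modz_small hx').
have := hc' i => /eqP hci.
by rewrite -modzDml hci modzDml addrK.
Qed.

Lemma no_div n p q (s : nat) (i : nat) : (0 < n)%N -> (0 < p)%N -> (0 < q)%N -> coprime p q ->
  (s = p \/ s = q) -> ~ ((p ^ n + q ^ n)%N%:Z %| s%:Z * (wt n p q i)%:Z)%Z.
Proof.
move=> n0 p0 q0 co hs; rewrite -PoszM dvdzE !absz_nat => H.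
have cN : coprime (p ^ n + q ^ n) (s * wt n p q i).
  rewrite coprimeMr; apply/andP; split.
    by case: hs => ->; rewrite coprime_sym ?coprime_pN ?coprime_qN.
  by rewrite coprime_sym coprime_wN.
move: cN; rewrite /coprime (gcdn_idPl H) => /eqP N1.
have : (1 <= p ^ n)%N by rewrite expn_gt0 p0.
have : (1 <= q ^ n)%N by rewrite expn_gt0 q0.
lia.
Qed.

Lemma unilat n p q : (0 < n)%N -> (0 < p)%N -> (0 < q)%N -> coprime p q -> p != q ->
  unilateral (p ^ n + q ^ n) (@tside n p q) (@tcorner n p q).
Proof.
move=> n0 p0 q0 co pq [[b x] gk] [[b' x'] gk'] _ hs i.
rewrite /tside /= in hs.
have bb : b' = b.
  by case: b b' hs {gk gk'} => [] [] // h; move/eqP: pq; rewrite h.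
move: gk'; rewrite bb => gk'.
have sP : ((if b then q else p) = p \/ (if b then q else p) = q) by case: b {gk gk' bb hs}; auto.
have key : forall v : int,
   cong_vec (p ^ n + q ^ n) (fun j => (x' j : nat)%:Z - (x j : nat)%:Z)
     (fun j => if j == i then v else 0) ->
   ((p ^ n + q ^ n)%N%:Z %| v * (wt n p q i)%:Z)%Z.
  move=> v hc.
  have := PhiZ_cong n p q _ _ _ hc; rewrite PhiZ_delta PhiZ_sub eqz_mod_dvd => h.
  move: gk gk'; rewrite /goodk /= !eqz_mod_dvd => g g'.
  set c := (if b then 0 else (q ^ n)%N%:Z) in g g'.
  have -> : v * (wt n p q i)%:Z =
     (PhiZ n p q (fun i0 => (x' i0 : nat)%:Z) - c) - (PhiZ n p q (fun i0 => (x i0 : nat)%:Z) - c)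
     - (PhiZ n p q (fun i0 => (x' i0 : nat)%:Z) - PhiZ n p q (fun i0 => (x i0 : nat)%:Z)
        - v * (wt n p q i)%:Z) by ring.
  by apply: rpredB => //; apply: rpredB.
split => hc.
  by apply: (no_div _ _ _ _ _ n0 p0 q0 co sP); apply: key.
apply: (no_div _ _ _ _ _ n0 p0 q0 co sP).
by rewrite -rpredN -mulNr; apply: key.
Qed.

Theorem theorem4 (n p q : nat) :
  (2 <= n)%N -> (0 < p)%N -> (0 < q)%N -> coprime p q ->
  (forall i : 'I_n,
     in_lattice (matA n p q) ((p ^ n + q ^ n)%N%:Z *: unitv i) /\
     (forall l : nat, (0 < l)%N ->
        in_lattice (matA n p q) (l%:Z *: unitv i) -> (p ^ n + q ^ n <= l)%N))
  /\
  (p != q ->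
   exists (I : finType) (side : I -> nat) (corner : I -> 'I_n -> int),
     is_tiling (p ^ n + q ^ n) side corner /\
     (forall k, side k = p \/ side k = q) /\
     unilateral (p ^ n + q ^ n) side corner).
Proof.
move=> n2 p0 q0 co.
have n0 : (0 < n)%N by apply: leq_trans n2.
split.
  move=> i; split; first exact: lattice_exists.
  by move=> l l0 hl; exact: (lattice_lower n p q i l n0 co l0 hl).
move=> pq.
exists (Tile n p q), (@tside n p q), (@tcorner n p q).
split; first exact: tiling.
split; first by move=> k; rewrite /tside; case: ((val k).1); auto.
exact: unilat.
Qed.
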